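(* Let $\mathcal{A}$ be a probabilistic automaton. Its extended Markov monoid $\mathcal{G}_+$, equipped with (componentwise) concatenation and with the iteration operation $(\mathbf{u},\mathbf{u}_+)\mapsto(\mathbf{u}^\sharp,\mathbf{u}_+)$ on idempotent elements, is a stabilization monoid.
   Context: Fix a finite alphabet $A$ and a probabilistic automaton $\mathcal{A}=(Q,q_0,\Delta,F)$, $\Delta:Q\times A\to\mathcal{D}(Q)$. A limit-word is a map $\mathbf{u}:Q\times Q\to\{0,1\}$ such that every $s$ has some $t$ with $\mathbf{u}(s,t)=1$. Concatenation: $(\mathbf{u}\cdot\mathbf{v})(s,t)=1$ iff there is $q$ with $\mathbf{u}(s,q)=\mathbf{v}(q,t)=1$. $\mathbf{u}$ is idempotent if $\mathbf{u}\cdot\mathbf{u}=\mathbf{u}$; for idempotent $\mathbf{u}$, $s$ is $\mathbf{u}$-recurrent if for all $t$, $\mathbf{u}(s,t)=1\Rightarrow\mathbf{u}(t,s)=1$, and $\mathbf{u}^\sharp(s,t)=1$ iff $\mathbf{u}(s,t)=1$ and $t$ is $\mathbf{u}$-recurrent. For $a\in A$, $\mathbf{a}(s,t)=1$ iff $\Delta(s,a)(t)>0$; $\mathbf{1}$ is the identity. An extended limit-word is a pair $(\mathbf{u},\mathbf{u}_+)$ of limit-words with $\mathbf{u}(s,t)=1\Rightarrow\mathbf{u}_+(s,t)=1$ for all $s,t$. Concatenation of extended limit-words is componentwise; $(\mathbf{u},\mathbf{u}_+)$ is idempotent if both components are idempotent, and then $(\mathbf{u},\mathbf{u}_+)^\sharp=(\mathbf{u}^\sharp,\mathbf{u}_+)$.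 The extended Markov monoid is the smallest set of extended limit-words containing $\{(\mathbf{a},\mathbf{a})\mid a\in A\}\cup\{(\mathbf{1},\mathbf{1})\}$ and closed under concatenation and under iteration of idempotents. A stabilization monoid $(M,\cdot,\sharp)$ is a finite monoid $(M,\cdot)$ with an operation $\sharp:E(M)\to E(M)$, $E(M)$ the set of idempotents of $M$, such that: $(a\cdot b)^\sharp\cdot a=a\cdot(b\cdot a)^\sharp$ whenever $a\cdot b, b\cdot a\in E(M)$; $(e^\sharp)^\sharp=e^\sharp$ for $e\in E(M)$; and $e^\sharp\cdot e=e^\sharp$ for $e\in E(M)$. *)

(* Defs.v *)
From mathcomp Require Import all_boot all_order all_algebra.
Set Implicit Arguments. Unset Strict Implicit. Unset Printing Implicit Defensive.
Import Order.TTheory GRing.Theory Num.Theory.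
Local Open Scope ring_scope.

Definition is_distr (R : numDomainType) (Q : finType) (d : {ffun Q -> R}) : Prop :=
  (forall t, 0 <= d t) /\ \sum_(t : Q) d t = 1.

Definition is_pa (R : numDomainType) (A Q : finType)
  (Delta : Q -> A -> {ffun Q -> R}) : Prop :=
  forall s a, is_distr (Delta s a).

Definition bmat (Q : finType) := {ffun Q * Q -> bool}.

Definition is_limit_word (Q : finType) (u : bmat Q) : Prop :=
  forall s, exists t, u (s, t).

Definition bmul (Q : finType) (u v : bmat Q) : bmat Q :=
  [ffun st : Q * Q => [exists q, u (st.1, q) && v (q, st.2)]].

Definition bone (Q : finType) : bmat Q := [ffun st : Q * Q => st.1 == st.2].

Definition bidem (Q : finType) (u : bmat Q) : bool := bmul u u == u.

Definition brecurrent (Q : finType) (u : bmat Q) (s : Q) : bool :=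
  [forall t, u (s, t) ==> u (t, s)].

Definition bsharp (Q : finType) (u : bmat Q) : bmat Q :=
  [ffun st : Q * Q => u st && brecurrent u st.2].

Definition letter_mat (R : numDomainType) (A Q : finType)
  (Delta : Q -> A -> {ffun Q -> R}) (a : A) : bmat Q :=
  [ffun st : Q * Q => 0 < Delta st.1 a st.2].

Definition ext (Q : finType) := (bmat Q * bmat Q)%type.

Definition is_ext_limit_word (Q : finType) (x : ext Q) : Prop :=
  is_limit_word x.1 /\ is_limit_word x.2 /\ (forall s t, x.1 (s, t) -> x.2 (s, t)).

Definition emul (Q : finType) (x y : ext Q) : ext Q := (bmul x.1 y.1, bmul x.2 y.2).
Definition eone (Q : finType) : ext Q := (bone Q, bone Q).
Definition eidem (Q : finType) (x : ext Q) : bool := bidem x.1 && bidem x.2.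
Definition esharp (Q : finType) (x : ext Q) : ext Q := (bsharp x.1, x.2).

Inductive ext_markov (R : numDomainType) (A Q : finType)
  (Delta : Q -> A -> {ffun Q -> R}) : ext Q -> Prop :=
| em_letter a : ext_markov Delta (letter_mat Delta a, letter_mat Delta a)
| em_one : ext_markov Delta (eone Q)
| em_mul x y : ext_markov Delta x -> ext_markov Delta y -> ext_markov Delta (emul x y)
| em_sharp x : ext_markov Delta x -> eidem x -> ext_markov Delta (esharp x).

(* Finiteness of M is automatic since T is a finType. *)
Definition stab_monoid (T : finType) (M : T -> Prop) (mul : T -> T -> T)
  (one : T) (sharp : T -> T) : Prop :=
  let idem e := mul e e = e in
     M one
  /\ (forall a b, M a -> M b -> M (mul a b))
  /\ (forall a b c, M a -> M b -> M c -> mul a (mul b c) = mul (mul a b) c)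
  /\ (forall a, M a -> mul one a = a /\ mul a one = a)
  /\ (forall e, M e -> idem e -> M (sharp e) /\ idem (sharp e))
  /\ (forall a b, M a -> M b -> idem (mul a b) -> idem (mul b a) ->
          mul (sharp (mul a b)) a = mul a (sharp (mul b a)))
  /\ (forall e, M e -> idem e -> sharp (sharp e) = sharp e)
  /\ (forall e, M e -> idem e -> mul (sharp e) e = sharp e).

(* Main.v *)
Require Import Defs.
From mathcomp Require Import all_boot all_order all_algebra.
Set Implicit Arguments. Unset Strict Implicit. Unset Printing Implicit Defensive.

Section H.
Variable Q : finType.
Implicit Types u v w : bmat Q.

Lemma bmulP u v s t : reflect (exists q, u (s,q) /\ v (q,t)) (bmul u v (s,t)).
Proof.
rewrite ffunE; apply: (iffP existsP) => [[q /andP [h1 h2]]|[q [h1 h2]]];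
  exists q; [split|apply/andP; split]; done.
Qed.

Lemma idemT u a b c : bidem u -> u (a,b) -> u (b,c) -> u (a,c).
Proof. move=> Hu h1 h2; rewrite -(eqP Hu); apply/bmulP; eauto. Qed.

Lemma idemS u s t : bidem u -> u (s,t) -> exists q, u (s,q) /\ u (q,t).
Proof. move=> Hu; rewrite -{1}(eqP Hu) => /bmulP; done. Qed.

Lemma recP u s : reflect (forall t, u (s,t) -> u (t,s)) (brecurrent u s).
Proof. apply: (iffP forallP) => h t; [exact/implyP/h | apply/implyP/h]. Qed.

Lemma bsharpE u s t : bsharp u (s,t) = u (s,t) && brecurrent u t.
Proof. by rewrite ffunE. Qed.

Lemma rec_refl u t : is_limit_word u -> bidem u -> brecurrent u t -> u (t,t).
Proof.
move=> Hl Hu /recP h; case: (Hl t) => x hx; exact: idemT Hu hx (h x hx).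
Qed.

Lemma bmulA u v w : bmul u (bmul v w) = bmul (bmul u v) w.
Proof.
apply/ffunP => [[s t]]; apply/bmulP/bmulP.
- case=> q [h1 /bmulP [r [h2 h3]]]; exists r; split => //; apply/bmulP; eauto.
- case=> q [/bmulP [r [h1 h2]] h3]; exists r; split => //; apply/bmulP; eauto.
Qed.

Lemma bmul1u u : bmul (bone Q) u = u.
Proof.
apply/ffunP => [[s t]]; apply/bmulP/idP.
- by case=> q []; rewrite ffunE /= => /eqP ->.
- by move=> h; exists s; rewrite ffunE /= eqxx.
Qed.

Lemma bmulu1 u : bmul u (bone Q) = u.
Proof.
apply/ffunP => [[s t]]; apply/bmulP/idP.
- by case=> q []; rewrite ffunE /= => h /eqP <-.
- by move=> h; exists t; rewrite ffunE /= eqxx.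
Qed.

Lemma bmul_limit u v : is_limit_word u -> is_limit_word v -> is_limit_word (bmul u v).
Proof.
move=> hu hv s; case: (hu s) => q hq; case: (hv q) => t ht; exists t.
apply/bmulP; eauto.
Qed.

Lemma sharp_limit u : is_limit_word u -> bidem u -> is_limit_word (bsharp u).
Proof.
move=> Hl Hu s; case: (Hl s) => t0 h0.
pose F t := #|[set x | u (t,x)]|.
case: (@arg_minnP _ t0 (fun t => u (s,t)) F h0) => t ht tmin.
have sub : forall a b, u (a,b) -> [set x | u (b,x)] \subset [set x | u (a,x)].
  move=> a b hab; apply/subsetP => x; rewrite !inE => hbx; exact: idemT Hu hab hbx.
have eqs : forall b, u (t,b) -> [set x | u (b,x)] = [set x | u (t,x)].
  move=> b htb; apply/eqP; rewrite eqEcard sub //=.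
  apply: tmin; exact: idemT Hu ht htb.
case: (Hl t) => x hx.
exists x; rewrite bsharpE (idemT Hu ht hx) /=; apply/recP => y hxy.
have hty : u (t,y) := idemT Hu hx hxy.
have : x \in [set z | u (y,z)] by rewrite (eqs y hty) inE.
by rewrite inE.
Qed.

Lemma sharp_idem u : is_limit_word u -> bidem u -> bidem (bsharp u).
Proof.
move=> Hl Hu; apply/eqP/ffunP => [[s t]]; apply/bmulP/idP.
- case=> q []; rewrite !bsharpE => /andP [h1 h2] /andP [h3 ->].
  by rewrite (idemT Hu h1 h3).
- rewrite bsharpE => /andP [h1 h2]; exists t; rewrite !bsharpE h1 h2 /=.
  by rewrite (rec_refl Hl Hu h2).
Qed.

Lemma sharp_sharp u : bsharp (bsharp u) = bsharp u.
Proof.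
apply/ffunP => [[s t]]; rewrite !bsharpE.
case h1: (u (s,t)) => //=; case h2 : (brecurrent u t) => //=.
apply/recP => x; rewrite !bsharpE => /andP [htx hx].
by rewrite (recP _ _ h2 _ htx) h2.
Qed.

Lemma sharp_mul u : is_limit_word u -> bidem u -> bmul (bsharp u) u = bsharp u.
Proof.
move=> Hl Hu; apply/ffunP => [[s t]]; apply/bmulP/idP.
- case=> q []; rewrite !bsharpE => /andP [h1 /recP h2] h3.
  rewrite (idemT Hu h1 h3) /=; apply/recP => x htx.
  have hqx := idemT Hu h3 htx.
  exact: idemT Hu (h2 x hqx) h3.
- rewrite bsharpE => /andP [h1 h2]; exists t; rewrite bsharpE h1 h2.
  by rewrite (rec_refl Hl Hu h2).
Qed.

Lemma sharp_swap u v : is_limit_word u -> is_limit_word v ->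
  bidem (bmul u v) -> bidem (bmul v u) ->
  bmul (bsharp (bmul u v)) u = bmul u (bsharp (bmul v u)).
Proof.
move=> Hu Hv He Hf.
have euf : bmul (bmul u v) u = bmul u (bmul v u) by rewrite bmulA.
have eeq : forall a b, bmul (bmul u v) (bmul u v) (a,b) = bmul u v (a,b)
  by move=> a b; rewrite (eqP He).
have feq : forall a b, bmul (bmul v u) (bmul v u) (a,b) = bmul v u (a,b)
  by move=> a b; rewrite (eqP Hf).
apply/ffunP => [[s t]]; apply/bmulP/bmulP.
- case=> q []; rewrite bsharpE => /andP [hsq /recP hq] hqt.
  have : bmul (bmul u v) u (s,t) by apply/bmulP; eauto.
  rewrite euf => /bmulP [p [hsp hpt]]; exists p; split => //.
  rewrite bsharpE hpt /=; apply/recP => x /bmulP [m [htm hmx]].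
  have hqm : bmul u v (q,m) by apply/bmulP; eauto.
  have hmq := hq m hqm.
  case: (Hv x) => w hxw.
  have hmw : bmul u v (m,w) by apply/bmulP; eauto.
  have hqw : bmul u v (q,w) by rewrite -eeq; apply/bmulP; eauto.
  have hwq := hq w hqw.
  (* x -v-> w -e-> q -u-> t : v e u = f f = f *)
  rewrite -feq; apply/bmulP.
  case/bmulP: hwq => r [hwr hrq].
  exists r; split; apply/bmulP; [exists w | exists q]; by split.
- case=> p [hsp]; rewrite bsharpE => /andP [hpt ht].
  have htt := rec_refl (bmul_limit Hv Hu) Hf ht.
  case/bmulP: (htt) => m [htm hmt].
  exists m; split => //.
  rewrite bsharpE; apply/andP; split.
    case/bmulP: hpt => z [hpz hzt].
    rewrite -eeq; apply/bmulP; exists z; split; apply/bmulP; eauto.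
  apply/recP => y /bmulP [r [hmr hry]].
  have htr : bmul v u (t,r) by apply/bmulP; eauto.
  case: (Hu y) => z hyz.
  have htz : bmul v u (t,z) by rewrite -feq; apply/bmulP; exists r; split => //; apply/bmulP; eauto.
  have hzt := recP _ _ ht z htz.
  case/bmulP: hzt => b [hzb hbt].
  rewrite -eeq; apply/bmulP; exists b; split; apply/bmulP; eauto.
Qed.

End H.

Lemma markov_limit (R : numDomainType) (A Q : finType) (Delta : Q -> A -> {ffun Q -> R}) x :
  is_pa Delta -> ext_markov Delta x -> is_limit_word x.1 /\ is_limit_word x.2.
Proof.
move=> Hpa; elim => //=.
- move=> a; suff h : is_limit_word (letter_mat Delta a) by [].
  move=> s; case: (Hpa s a) => h0 h1.
  have : [exists t, (0 < Delta s a t)%R].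
    case: (boolP [exists t, (0 < Delta s a t)%R]) => //; rewrite negb_exists => /forallP H; exfalso.
    have : (\sum_(t : Q) Delta s a t = 0)%R.
      apply: big1 => t _; apply/eqP; rewrite Order.POrderTheory.eq_le h0 andbT.
      by move: (H t); rewrite Num.Theory.lt0r negb_and negbK h0 orbF => /eqP ->.
    by rewrite h1 => /eqP; rewrite GRing.oner_eq0.
  by case/existsP => t ht; exists t; rewrite ffunE.
- split => s; exists s; by rewrite ffunE /=.
- move=> x1 y1 _ [h1 h2] _ [h3 h4]; split; exact: bmul_limit.
- move=> x1 _ [h1 h2] /andP [i1 i2]; split => //; exact: sharp_limit.
Qed.

Lemma eidemP (Q : finType) (e : ext Q) : emul e e = e -> bidem e.1 /\ bidem e.2.
Proof. case: e => u w; rewrite /emul /= => -[h1 h2]; by rewrite /bidem h1 h2 eqxx. Qed.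

Theorem lemma3p12 (R : realFieldType) (A Q : finType) (q0 : Q)
  (Delta : Q -> A -> {ffun Q -> R}) (F : {set Q}) :
  is_pa Delta ->
  stab_monoid (ext_markov Delta) (@emul Q) (eone Q) (@esharp Q).
Proof.
move=> Hpa.
have L := fun x => @markov_limit R A Q Delta x Hpa.
split; first exact: em_one.
split; first by move=> a b ha hb; exact: em_mul.
split; first by move=> [a1 a2] [b1 b2] [c1 c2] _ _ _; rewrite /emul /= !bmulA.
split; first by move=> [a1 a2] _; rewrite /emul /eone /= !bmul1u !bmulu1.
split.
  move=> e He /eidemP [i1 i2]; split.
    by apply: em_sharp => //; rewrite /eidem i1 i2.
  case: (L _ He) => l1 l2; case: e He i1 i2 l1 l2 => u w _ /= i1 i2 l1 l2.
  by rewrite /esharp /emul /= (eqP (sharp_idem l1 i1)) (eqP i2).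
split.
  move=> [a1 a2] [b1 b2] ha hb /eidemP [i1 i2] /eidemP [j1 j2].
  case: (L _ ha) => /= la1 la2; case: (L _ hb) => /= lb1 lb2.
  rewrite /emul /esharp /= in i1 i2 j1 j2 *.
  by rewrite sharp_swap // bmulA.
split.
  by move=> [u w] _ _; rewrite /esharp /= sharp_sharp.
move=> e He /eidemP [i1 i2]; case: (L _ He) => l1 l2.
case: e He i1 i2 l1 l2 => u w _ /= i1 i2 l1 l2.
by rewrite /esharp /emul /= sharp_mul // (eqP i2).
Qed.
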